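(* Let $A=(A_1,A_2)\in SL(2,\mathbb{C})^{\times2}$ satisfy $\sigma_{12}\neq0$. If $\nu_1\neq0$, then $A$ is conjugate (by a common element) to a pair $B=(B_1,B_2)$ of the form $B_1=\begin{pmatrix}\alpha_1+i\beta_1&0\\0&\alpha_1-i\beta_1\end{pmatrix}$, $B_2=\begin{pmatrix}\alpha_2+i\beta_2&i\delta_2\\i\delta_2&\alpha_2-i\beta_2\end{pmatrix}$ with $\alpha_1^2+\beta_1^2=1$, $\alpha_2^2+\beta_2^2+\delta_2^2=1$ and $\delta_2^2=\frac{\sigma_{12}}{2\nu_1}\neq0$. If $\nu_1=0$ and $\nu_2\neq0$, the same holds with the roles of $B_1$ and $B_2$ (and of the indices $1,2$) switched. If $\nu_1=\nu_2=0$, then $A$ is conjugate to a pair $B=(B_1,B_2)$ of the form $B_1=\begin{pmatrix}\alpha_1+\lambda&i\lambda\\i\lambda&\alpha_1-\lambda\end{pmatrix}$, $B_2=\begin{pmatrix}\alpha_2-\lambda&i\lambda\\i\lambda&\alpha_2+\lambda\end{pmatrix}$ with $\alpha_1^2=\alpha_2^2=1$ and $\lambda^4=\frac{\sigma_{12}}{16}\neq0$.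
   Context: All parameters are complex. $\sigma_{12}=\mathsf{tr}(A_1A_2A_1^{-1}A_2^{-1})-2$ and $\nu_j=\frac{(\mathsf{tr}A_j)^2}{2}-2$. *)

(* Defs.v *)
From HB Require Import structures.
From mathcomp Require Import all_boot all_order all_algebra.
Set Implicit Arguments. Unset Strict Implicit. Unset Printing Implicit Defensive.
Import Order.TTheory GRing.Theory Num.Theory.
Local Open Scope ring_scope.

Definition mx2 (C : nzRingType) (a b c d : C) : 'M[C]_2 :=
  \matrix_(i < 2, j < 2)
    if (i == 0 :> nat) then (if (j == 0 :> nat) then a else b)
    else (if (j == 0 :> nat) then c else d).

Definition sigma12 (C : comUnitRingType) (A1 A2 : 'M[C]_2) : C :=
  \tr (A1 *m A2 *m invmx A1 *m invmx A2) - 2.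

Definition nu (C : fieldType) (A : 'M[C]_2) : C := (\tr A) ^+ 2 / 2 - 2.

Definition conj_by (C : comUnitRingType) (P A : 'M[C]_2) : 'M[C]_2 :=
  P *m A *m invmx P.

(* Main.v *)
Require Import Defs.
From HB Require Import structures.
From mathcomp Require Import all_boot all_order all_algebra.
From mathcomp Require Import ring.
Import Order.TTheory GRing.Theory Num.Theory.
Local Open Scope ring_scope.

Section Basic.
Variable C : fieldType.
Implicit Types a b c d k : C.

Lemma big_ord2 (F : 'I_2 -> C) : \sum_(i < 2) F i = F 0 + F 1.
Proof. rewrite !big_ord_recl big_ord0 addr0; congr (_ + F _); exact: val_inj. Qed.

Lemma mx2E (M : 'M[C]_2) : M = mx2 (M 0 0) (M 0 1) (M 1 0) (M 1 1).
Proof.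
apply/matrixP => i j; rewrite mxE.
case: i => [[|[|i]] Hi] //; case: j => [[|[|j]] Hj] //=;
  by congr (M _ _); apply: val_inj.
Qed.

Lemma mx2_mul a b c d a' b' c' d' :
  mx2 a b c d *m mx2 a' b' c' d' =
  mx2 (a * a' + b * c') (a * b' + b * d') (c * a' + d * c') (c * b' + d * d').
Proof.
apply/matrixP => i j; rewrite !mxE big_ord2 !mxE.
by case: i => [[|[|i]] Hi] //; case: j => [[|[|j]] Hj].
Qed.

Lemma mx2_det a b c d : \det (mx2 a b c d) = a * d - b * c.
Proof.
rewrite (expand_det_row _ 0) big_ord2 /cofactor !det_mx11 !mxE /=.
have -> : (0 + 1 %% 2 = 1)%N by []. by rewrite addn0 expr0 expr1 mul1r mulN1r mulrN.
Qed.

Lemma mx2_tr a b c d : \tr (mx2 a b c d) = a + d.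
Proof. by rewrite /mxtrace big_ord2 !mxE. Qed.

Lemma mx2_scalar a : a%:M = mx2 a 0 0 a :> 'M[C]_2.
Proof.
apply/matrixP => i j; rewrite !mxE.
by case: i => [[|[|i]] Hi] //; case: j => [[|[|j]] Hj].
Qed.

Lemma mx2_scale k a b c d : k *: mx2 a b c d = mx2 (k * a) (k * b) (k * c) (k * d).
Proof.
apply/matrixP => i j; rewrite !mxE.
by case: i => [[|[|i]] Hi] //; case: j => [[|[|j]] Hj].
Qed.

Lemma mx2_eq a b c d a' b' c' d' : a = a' -> b = b' -> c = c' -> d = d' ->
  mx2 a b c d = mx2 a' b' c' d'.
Proof. by move=> -> -> -> ->. Qed.



Lemma inv_uniq n (A B : 'M[C]_n) : A *m B = 1%:M -> invmx A = B.
Proof.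
move=> AB; have [uA _] := mulmx1_unit AB.
by rewrite -[invmx A]mulmx1 -AB mulmxA mulVmx // mul1mx.
Qed.

Lemma mx2_inv a b c d : a * d - b * c != 0 ->
  invmx (mx2 a b c d) =
  mx2 (d / (a * d - b * c)) (- b / (a * d - b * c))
      (- c / (a * d - b * c)) (a / (a * d - b * c)).
Proof.
move=> HD; apply: inv_uniq; rewrite mx2_mul mx2_scalar.
by apply: mx2_eq; field.
Qed.

Lemma unit_det1 n (P : 'M[C]_n) : \det P = 1 -> P \in unitmx.
Proof. by move=> H; rewrite unitmxE H unitr1. Qed.


Implicit Types P Q A B : 'M[C]_2.

Lemma det_conj P A : P \in unitmx -> \det (conj_by P A) = \det A.
Proof.
move=> uP; rewrite /conj_by !det_mulmx det_inv mulrC mulrA mulVr ?mul1r //.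
Qed.

Lemma tr_conj P A : P \in unitmx -> \tr (conj_by P A) = \tr A.
Proof. by move=> uP; rewrite /conj_by mxtrace_mulC mulKmx. Qed.

Lemma conj_mul P A B : P \in unitmx ->
  conj_by P (A *m B) = conj_by P A *m conj_by P B.
Proof.
move=> uP; rewrite /conj_by !mulmxA mulmxKV //.
Qed.

Lemma inv_conj P A : P \in unitmx -> A \in unitmx ->
  invmx (conj_by P A) = conj_by P (invmx A).
Proof.
move=> uP uA; apply: inv_uniq; rewrite -conj_mul // mulmxV //.
by rewrite /conj_by mulmx1 mulmxV.
Qed.

Lemma conj_comp P Q A : P \in unitmx -> Q \in unitmx ->
  conj_by (Q *m P) A = conj_by Q (conj_by P A).
Proof.
move=> uP uQ; rewrite /conj_by.
have -> : invmx (Q *m P) = invmx P *m invmx Q.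
  apply: inv_uniq; rewrite mulmxA -[Q *m P *m _]mulmxA mulmxV // mulmx1 mulmxV //.
by rewrite !mulmxA.
Qed.

Lemma conj_scale k P A : k != 0 -> P \in unitmx ->
  conj_by (k *: P) A = conj_by P A.
Proof.
move=> k0 uP; rewrite /conj_by invmxZ; last by rewrite unitmxZ ?unitfE.
by rewrite -scalemxAl -scalemxAl -scalemxAr scalerA mulfV // scale1r.
Qed.

End Basic.

Lemma sigma_conj (C : fieldType) (P A1 A2 : 'M[C]_2) :
  P \in unitmx -> A1 \in unitmx -> A2 \in unitmx ->
  sigma12 (conj_by P A1) (conj_by P A2) = sigma12 A1 A2.
Proof.
move=> uP u1 u2; rewrite /sigma12 !inv_conj // -!conj_mul // tr_conj //.
Qed.

Lemma nu_conj (C : fieldType) (P A : 'M[C]_2) :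
  P \in unitmx -> nu (conj_by P A) = nu A.
Proof. by move=> uP; rewrite /nu tr_conj. Qed.

Lemma sigma_sym_mx2 (C : fieldType) (a b c d p q r s : C) :
  a * d - b * c = 1 -> p * s - q * r = 1 ->
  sigma12 (mx2 p q r s) (mx2 a b c d) = sigma12 (mx2 a b c d) (mx2 p q r s).
Proof.
move=> H1 H2.
rewrite /sigma12 !mx2_inv ?H1 ?H2 ?oner_neq0 // !mx2_mul !mx2_tr !divr1.
ring.
Qed.

Lemma sigma_diag (C : fieldType) (l p q r s : C) :
  l != 0 -> p * s - q * r = 1 ->
  sigma12 (mx2 l 0 0 l^-1) (mx2 p q r s) = - (q * r) * (l - l^-1) ^+ 2.
Proof.
move=> l0 H2.
have H1 : l * l^-1 - 0 * 0 = 1 by rewrite mulfV // mul0r subr0.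
rewrite /sigma12 !mx2_inv ?H1 ?H2 ?oner_neq0 // !mx2_mul !mx2_tr !divr1.
have Hp : p * s = 1 + q * r by rewrite -H2; ring.
by field: Hp.
Qed.

Ltac side := repeat (match goal with |- is_true (_ && _) => apply/andP; split end); try assumption.

Lemma two_neq0 (C : numClosedFieldType) : (2 : C) != 0.
Proof. by rewrite pnatr_eq0. Qed.

Lemma case1_diag (C : numClosedFieldType) (l p q r s : C) :
  l != 0 -> l ^+ 2 != 1 -> p * s - q * r = 1 ->
  sigma12 (mx2 l 0 0 l^-1) (mx2 p q r s) != 0 ->
  exists (Q : 'M[C]_2) (a1 b1 a2 b2 d2 : C),
   [/\ \det Q = 1, conj_by Q (mx2 l 0 0 l^-1) = mx2 (a1 + 'i * b1) 0 0 (a1 - 'i * b1),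
       conj_by Q (mx2 p q r s) = mx2 (a2 + 'i * b2) ('i * d2) ('i * d2) (a2 - 'i * b2) &
     [/\ a1 ^+ 2 + b1 ^+ 2 = 1, a2 ^+ 2 + b2 ^+ 2 + d2 ^+ 2 = 1 &
        d2 ^+ 2 = sigma12 (mx2 l 0 0 l^-1) (mx2 p q r s) / (2 * nu (mx2 l 0 0 l^-1))
        /\ d2 ^+ 2 != 0]].
Proof.
move=> l0 l2 H2; rewrite sigma_diag // => Hs.
have two0 := two_neq0 C.
have hi : 'i ^+ 2 = -1 :> C := sqrCi C.
have qr0 : q * r != 0 by apply: contraNneq Hs => ->; rewrite oppr0 mul0r.
have [q0 r0] : q != 0 /\ r != 0 by move: qr0; rewrite mulf_eq0 negb_or => /andP.
have lm : l - l^-1 != 0.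
  apply: contraNneq l2 => /eqP; rewrite subr_eq0 => /eqP H.
  by rewrite expr2 {2}H mulfV.
set u := 4.-root (r / q).
have u4 : u ^+ 4 = r / q by rewrite /u rootCK.
have u0 : u != 0 by rewrite /u rootC_eq0 // mulf_neq0 ?invr_eq0.
have Hr : r = u ^+ 4 * q by rewrite u4 divfK.
have HdQ : u * u^-1 - 0 * 0 = 1 by rewrite mulfV // mul0r subr0.
have Hp : p * s = 1 + q * r by rewrite -H2; ring.
have Qi : invmx (mx2 u 0 0 u^-1) = mx2 u^-1 0 0 u.
  rewrite mx2_inv HdQ ?oner_neq0 //; apply: mx2_eq; by field; side.
exists (mx2 u 0 0 u^-1), ((l + l^-1) / 2), (- 'i * (l - l^-1) / 2),
  ((p + s) / 2), (- 'i * (p - s) / 2), (- 'i * u ^+ 2 * q).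
split.
- by rewrite mx2_det.
- rewrite /conj_by Qi !mx2_mul; apply: mx2_eq; by field: hi; side.
- rewrite /conj_by Qi !mx2_mul Hr; apply: mx2_eq; by field: hi; side.
- split.
  + by field: hi; side.
  + rewrite Hr in Hp; by field: hi Hp; side.
  + split.
    * rewrite /nu mx2_tr Hr.
      have Hnu : (l + l^-1) ^+ 2 / 2 - 2 = (l - l^-1) ^+ 2 / 2 by field.
      rewrite Hnu.
      field: hi; side.
      by rewrite -expr2 subr_eq0.
    * have -> : (- 'i * u ^+ 2 * q) ^+ 2 = - (q * r) by rewrite Hr; ring: hi.
      by rewrite oppr_eq0.
Qed.

Lemma normalize (C : numClosedFieldType) (P0 : 'M[C]_2) :
  \det P0 != 0 -> exists P, \det P = 1 /\ forall A, conj_by P A = conj_by P0 A.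
Proof.
move=> D0; set s := sqrtC (\det P0)^-1.
have s2 : s ^+ 2 = (\det P0)^-1 by rewrite /s sqrtCK.
have s0 : s != 0 by rewrite /s sqrtC_eq0 invr_eq0.
exists (s *: P0); split.
  by rewrite detZ s2 mulVf.
by move=> A; rewrite conj_scale // unitmxE unitfE.
Qed.

Lemma diag_mx2 (C : numClosedFieldType) (a b c d : C) :
  a * d - b * c = 1 -> (a + d) ^+ 2 != 4 ->
  exists (P : 'M[C]_2) (l : C),
    [/\ \det P = 1, l != 0, l ^+ 2 != 1 & conj_by P (mx2 a b c d) = mx2 l 0 0 l^-1].
Proof.
move=> H1 Ht.
have two0 := two_neq0 C.
have [b0|b0] := eqVneq b 0.
- rewrite b0 mul0r subr0 in H1.
  have a0 : a != 0 by apply: contra_eq_neq H1 => ->; rewrite mul0r eq_sym oner_eq0.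
  have Hd : d = a^-1 by apply: (mulfI a0); rewrite mulfV.
  have a2 : a ^+ 2 != 1.
    apply: contra_neq Ht => a2.
    have ai : a^-1 = a by apply: (mulfI a0); rewrite mulfV // -expr2 a2.
    rewrite Hd ai; have -> : (a + a) ^+ 2 = 4 * a ^+ 2 by ring.
    by rewrite a2 mulr1.
  have da : d - a != 0.
    apply: contra_neq a2 => /eqP; rewrite subr_eq0 => /eqP da.
    by rewrite expr2 -{2}da Hd mulfV.
  have [P [HP HPc]] := @normalize C (mx2 1 0 (c / (d - a)) 1)
    ltac:(by rewrite mx2_det mulr1 mul0r subr0 oner_eq0).
  exists P, a; split => //.
  rewrite HPc /conj_by mx2_inv; last by rewrite mulr1 mul0r subr0 oner_eq0.
  have a2' : 1 + - a * a != 0 by rewrite mulNr -expr2 subr_eq0 eq_sym.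
  by rewrite !mx2_mul b0 Hd; apply: mx2_eq; field; side.
set t := a + d; set S := sqrtC (t ^+ 2 - 4).
have S2 : S ^+ 2 = t ^+ 2 - 4 by rewrite /S sqrtCK.
have S0 : S != 0 by rewrite /S sqrtC_eq0 subr_eq0.
set l := (t + S) / 2.
have Hl : l * (t - l) = 1 by rewrite /l; field: S2.
have l0 : l != 0 by apply: contra_eq_neq Hl => ->; rewrite mul0r eq_sym oner_eq0.
have Hli : l^-1 = t - l by apply: (mulfI l0); rewrite mulfV.
have Hd2 : d = l + l^-1 - a by rewrite Hli /t; ring.
have HS : l - l^-1 = S by rewrite Hli /l; field.
have l2 : l ^+ 2 != 1.
  apply: contra_neq S0 => H.
  have li : l^-1 = l by apply: (mulfI l0); rewrite mulfV // -expr2 H.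
  by rewrite -HS li subrr.
have Hc : c = (a * d - 1) / b by rewrite -H1; field.
have D0 : (l^-1 - a) * b - (- b) * (- (l - a)) != 0.
  have -> : (l^-1 - a) * b - (- b) * (- (l - a)) = - (b * S) by rewrite -HS; ring.
  by rewrite oppr_eq0 mulf_neq0.
have [P [HP HPc]] := @normalize C (mx2 (l^-1 - a) (- b) (- (l - a)) b)
    ltac:(by rewrite mx2_det).
exists P, l; split => //.
have D1 : (1 + - a * l) * b + - (- b * - (l - a)) * l != 0.
  have -> : (1 + - a * l) * b + - (- b * - (l - a)) * l =
    l * ((l^-1 - a) * b - (- b) * (- (l - a))) by field.
  by rewrite mulf_neq0.
by rewrite HPc /conj_by mx2_inv // !mx2_mul Hc Hd2; apply: mx2_eq; field; side.
Qed.

Lemma case1 (C : numClosedFieldType) (A1 A2 : 'M[C]_2) :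
  \det A1 = 1 -> \det A2 = 1 -> sigma12 A1 A2 != 0 -> nu A1 != 0 ->
    exists (P : 'M[C]_2) (a1 b1 a2 b2 d2 : C),
      [/\ \det P = 1,
          conj_by P A1 = mx2 (a1 + 'i * b1) 0 0 (a1 - 'i * b1),
          conj_by P A2 = mx2 (a2 + 'i * b2) ('i * d2) ('i * d2) (a2 - 'i * b2) &
        [/\ a1 ^+ 2 + b1 ^+ 2 = 1,
          a2 ^+ 2 + b2 ^+ 2 + d2 ^+ 2 = 1 &
          d2 ^+ 2 = sigma12 A1 A2 / (2 * nu A1) /\ d2 ^+ 2 != 0]].
Proof.
move=> h1 h2 hs hn.
have two0 := two_neq0 C.
have Ht : (\tr A1) ^+ 2 != 4.
  by apply: contraNneq hn => H; rewrite /nu H; apply/eqP; field.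
have h1' : A1 0 0 * A1 1 1 - A1 0 1 * A1 1 0 = 1 by rewrite -mx2_det -mx2E.
have Ht' : (A1 0 0 + A1 1 1) ^+ 2 != 4 by rewrite -(@mx2_tr _ _ (A1 0 1) (A1 1 0)) -mx2E.
have [P1 [l [hP1 l0 l2 hc1]]] := @diag_mx2 C _ _ _ _ h1' Ht'.
rewrite -mx2E in hc1.
have uP1 := @unit_det1 _ _ P1 hP1.
set B2 := conj_by P1 A2.
have hB2 : \det B2 = 1 by rewrite det_conj.
have hB2' : B2 0 0 * B2 1 1 - B2 0 1 * B2 1 0 = 1 by rewrite -mx2_det -mx2E.
have hs' : sigma12 (mx2 l 0 0 l^-1) (mx2 (B2 0 0) (B2 0 1) (B2 1 0) (B2 1 1)) != 0.
  by rewrite -mx2E -hc1 sigma_conj ?unit_det1.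
have [Q [a1 [b1 [a2 [b2 [d2 [hQ hq1 hq2 [e1 e2 [e3 e4]]]]]]]]] :=
  @case1_diag C _ _ _ _ _ l0 l2 hB2' hs'.
exists (Q *m P1), a1, b1, a2, b2, d2.
rewrite -mx2E in hq2 e3; rewrite -hc1 in hq1 e3.
rewrite sigma_conj ?unit_det1 // nu_conj // in e3.
split => //.
- by rewrite det_mulmx hQ hP1 mulr1.
- by rewrite conj_comp // unit_det1.
- by rewrite conj_comp // unit_det1.
Qed.

Lemma sigma_par (C : numClosedFieldType) (a1 a2 e f g h : C) :
  a1 ^+ 2 = 1 -> a2 ^+ 2 = 1 ->
  sigma12 (mx2 (a1 + f * e) (f ^+ 2) (- e ^+ 2) (a1 - f * e))
          (mx2 (a2 + h * g) (h ^+ 2) (- g ^+ 2) (a2 - h * g)) = (g * f - h * e) ^+ 4.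
Proof.
move=> H1 H2.
have d1 : (a1 + f * e) * (a1 - f * e) - f ^+ 2 * (- e ^+ 2) = 1 by ring: H1.
have d2 : (a2 + h * g) * (a2 - h * g) - h ^+ 2 * (- g ^+ 2) = 1 by ring: H2.
rewrite /sigma12 !mx2_inv ?d1 ?d2 ?oner_neq0 // !mx2_mul !mx2_tr !divr1.
ring: H1 H2.
Qed.

Lemma case3_core (C : numClosedFieldType) (a1 a2 e f g h : C) :
  a1 ^+ 2 = 1 -> a2 ^+ 2 = 1 ->
  sigma12 (mx2 (a1 + f * e) (f ^+ 2) (- e ^+ 2) (a1 - f * e))
          (mx2 (a2 + h * g) (h ^+ 2) (- g ^+ 2) (a2 - h * g)) != 0 ->
  exists (P : 'M[C]_2) (l : C),
      [/\ \det P = 1,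
          conj_by P (mx2 (a1 + f * e) (f ^+ 2) (- e ^+ 2) (a1 - f * e))
            = mx2 (a1 + l) ('i * l) ('i * l) (a1 - l),
          conj_by P (mx2 (a2 + h * g) (h ^+ 2) (- g ^+ 2) (a2 - h * g))
            = mx2 (a2 - l) ('i * l) ('i * l) (a2 + l) &
          l ^+ 4 = sigma12 (mx2 (a1 + f * e) (f ^+ 2) (- e ^+ 2) (a1 - f * e))
          (mx2 (a2 + h * g) (h ^+ 2) (- g ^+ 2) (a2 - h * g)) / 16 /\ l ^+ 4 != 0].
Proof.
move=> H1 H2; rewrite sigma_par // => hs.
have two0 := two_neq0 C.
have hi : 'i ^+ 2 = -1 :> C := sqrCi C.
have i0 : 'i != 0 :> C := neq0Ci C.
have d0 : g * f - h * e != 0 by apply: contraNneq hs => ->; rewrite expr0n.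
have D0 : 'i * (g + e) * (f - h) - 'i * (h + f) * (e - g) != 0.
  have -> : 'i * (g + e) * (f - h) - 'i * (h + f) * (e - g) = 2 * 'i * (g * f - h * e)
    by ring.
  by rewrite !mulf_neq0.
have [P [HP HPc]] := @normalize C (mx2 ('i * (g + e)) ('i * (h + f)) (e - g) (f - h))
  ltac:(by rewrite mx2_det).
have Qi := @mx2_inv C _ _ _ _ D0.
exists P, ((g * f - h * e) / 2); split => //.
- by rewrite HPc /conj_by Qi !mx2_mul; apply: mx2_eq; field: hi; side.
- by rewrite HPc /conj_by Qi !mx2_mul; apply: mx2_eq; field: hi; side.
- split; first by field.
  by rewrite expf_neq0 // mulf_neq0 // invr_eq0.
Qed.

Lemma nilp_param (C : numClosedFieldType) (u v w : C) :
  u ^+ 2 + v * w = 0 -> exists e f, [/\ u = f * e, v = f ^+ 2 & w = - e ^+ 2].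
Proof.
move=> H.
have [v0|v0] := eqVneq v 0.
- rewrite v0 mul0r addr0 in H.
  have u0 : u = 0 by move: H => /eqP; rewrite expf_eq0 /= => /eqP.
  exists (sqrtC (- w)), 0; split.
  + by rewrite u0 mul0r.
  + by rewrite v0 expr0n.
  + by rewrite sqrtCK opprK.
- exists (u / sqrtC v), (sqrtC v).
  have f0 : sqrtC v != 0 by rewrite sqrtC_eq0.
  have f2 : sqrtC v ^+ 2 = v by rewrite sqrtCK.
  split.
  + by rewrite mulrC divfK.
  + by [].
  + rewrite expr_div_n f2.
    apply: (mulfI v0); rewrite mulrN mulrCA mulfV // mulr1.
    by apply/eqP; rewrite -addr_eq0 addrC H.
Qed.

Lemma to_par (C : numClosedFieldType) (A : 'M[C]_2) :
  \det A = 1 -> nu A = 0 ->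
  exists a1 e f, a1 ^+ 2 = 1 /\ A = mx2 (a1 + f * e) (f ^+ 2) (- e ^+ 2) (a1 - f * e).
Proof.
move=> h hn.
have two0 := two_neq0 C.
set a := A 0 0; set b := A 0 1; set c := A 1 0; set d := A 1 1.
have EA : A = mx2 a b c d := @mx2E C A.
rewrite EA mx2_det in h; rewrite /nu EA mx2_tr in hn.
have Ht : (a + d) ^+ 2 = 4.
  have -> : (a + d) ^+ 2 = 2 * ((a + d) ^+ 2 / 2 - 2) + 4 by field.
  by rewrite hn mulr0 add0r.
have Hbc : b * c = a * d - 1 by rewrite -h; ring.
have Hn : (a - (a + d) / 2) ^+ 2 + b * c = 0.
  rewrite Hbc.
  have -> : (a - (a + d) / 2) ^+ 2 + (a * d - 1) = ((a + d) ^+ 2 - 4) / 4 by field.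
  by rewrite Ht subrr mul0r.
have [e [f [he hf hg]]] := @nilp_param C _ _ _ Hn.
exists ((a + d) / 2), e, f; split.
- by rewrite expr_div_n Ht; field.
- rewrite EA -he -hf -hg; apply: mx2_eq => //.
  + by field.
  + by field.
Qed.

Lemma sigma_sym (C : fieldType) (A1 A2 : 'M[C]_2) :
  \det A1 = 1 -> \det A2 = 1 -> sigma12 A2 A1 = sigma12 A1 A2.
Proof.
move=> h1 h2; rewrite (@mx2E C A1) (@mx2E C A2) in h1 h2 *.
rewrite !mx2_det in h1 h2; exact: sigma_sym_mx2.
Qed.

Theorem proposition5p3 (C : numClosedFieldType) (A1 A2 : 'M[C]_2) :
  \det A1 = 1 -> \det A2 = 1 -> sigma12 A1 A2 != 0 ->
  (nu A1 != 0 ->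
    exists (P : 'M[C]_2) (a1 b1 a2 b2 d2 : C),
      [/\ \det P = 1,
          conj_by P A1 = mx2 (a1 + 'i * b1) 0 0 (a1 - 'i * b1),
          conj_by P A2 = mx2 (a2 + 'i * b2) ('i * d2) ('i * d2) (a2 - 'i * b2) &
        [/\ a1 ^+ 2 + b1 ^+ 2 = 1,
          a2 ^+ 2 + b2 ^+ 2 + d2 ^+ 2 = 1 &
          d2 ^+ 2 = sigma12 A1 A2 / (2 * nu A1) /\ d2 ^+ 2 != 0]]) /\
  (nu A1 = 0 -> nu A2 != 0 ->
    exists (P : 'M[C]_2) (a2 b2 a1 b1 d1 : C),
      [/\ \det P = 1,
          conj_by P A2 = mx2 (a2 + 'i * b2) 0 0 (a2 - 'i * b2),
          conj_by P A1 = mx2 (a1 + 'i * b1) ('i * d1) ('i * d1) (a1 - 'i * b1) &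
        [/\ a2 ^+ 2 + b2 ^+ 2 = 1,
          a1 ^+ 2 + b1 ^+ 2 + d1 ^+ 2 = 1 &
          d1 ^+ 2 = sigma12 A1 A2 / (2 * nu A2) /\ d1 ^+ 2 != 0]]) /\
  (nu A1 = 0 -> nu A2 = 0 ->
    exists (P : 'M[C]_2) (a1 a2 l : C),
      [/\ \det P = 1,
          conj_by P A1 = mx2 (a1 + l) ('i * l) ('i * l) (a1 - l),
          conj_by P A2 = mx2 (a2 - l) ('i * l) ('i * l) (a2 + l) &
        [/\ a1 ^+ 2 = 1, a2 ^+ 2 = 1 &
          l ^+ 4 = sigma12 A1 A2 / 16 /\ l ^+ 4 != 0]]).
Proof.
move=> h1 h2 hs; split; [|split].
- by move=> hn; exact: (@case1 C A1 A2 h1 h2 hs hn).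
- move=> _ hn2.
  have hs' : sigma12 A2 A1 != 0 by rewrite (@sigma_sym C A1 A2).
  have := @case1 C A2 A1 h2 h1 hs' hn2.
  by rewrite (@sigma_sym C A1 A2).
- move=> n1 n2.
  have [a1 [e [f [ha1 E1]]]] := @to_par C A1 h1 n1.
  have [a2 [g [h [ha2 E2]]]] := @to_par C A2 h2 n2.
  rewrite E1 E2 in hs *.
  have [P [l [hP c1 c2 hl]]] := @case3_core C a1 a2 e f g h ha1 ha2 hs.
  by exists P, a1, a2, l; split.
Qed.
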